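(* For every $n\in\mathbb N$, Thompson's group $T$ acts transitively, via $t\cdot x=\iota(t)(x)$, on the set $\Lambda_n$ of $n$-tuples $(x_1,\ldots,x_n)$ of pairwise distinct elements of $Z$ which are cyclically ordered with respect to $\le_{\rm lex}$ (i.e. some cyclic rotation $(x_k,\ldots,x_n,x_1,\ldots,x_{k-1})$ is strictly $\le_{\rm lex}$-increasing).
   Context: Let $\{0,1\}^*$ be the finite words over $\{0,1\}$ (empty word $\varepsilon$) and $Z=\{0,1\}^*\cup\{\zeta\}$ for an extra symbol $\zeta$. Order $Z$ by $\le_{\rm lex}$: for words $x,y$ append the infinite string $\tfrac12\tfrac12\cdots$ and compare lexicographically with $0<\tfrac12<1$; $\zeta$ is larger than all words. A finite rooted binary subtree is a finite prefix-closed set of words containing $\varepsilon$ in which each element has both or neither of its children $x0,x1$; leaves are elements with no children, nodes the others; for such $R$ let $b_R:\mathrm{nodes}(R)\cup\{\zeta\}\to\mathrm{leaves}(R)$ be the unique $\le_{\rm lex}$-preserving bijection. Thompson's group $T$ is the group of homeomorphisms $v$ of $\{0,1\}^{\mathbb N}$ for which there are finite rooted binary subtrees $L,R$ with leaves $\ell_1<_{\rm lex}\cdots<_{\rm lex}\ell_k$, $r_1<_{\rm lex}\cdots<_{\rm lex}r_k$, and a cyclic shift $f(\ell_i)=r_{i+c \bmod k}$, such that $v(\ell\omega)=f(\ell)\omega$. Define the bijection $\iota(v)$ of $Z$ by $\iota(v)(x)=b_R^{-1}(f(b_L(x)))$ for $x\in\mathrm{nodes}(L)\cup\{\zeta\}$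 and $\iota(v)(\ell s)=f(\ell)s$ for $\ell\in\mathrm{leaves}(L)$, $s\in\{0,1\}^*$; this is independent of the choice of $(L,R,f)$ and defines an action of $T$ on $Z$. *)

(* Defs.v *)
From mathcomp Require Import all_boot.
Set Implicit Arguments. Unset Strict Implicit. Unset Printing Implicit Defensive.

(* Words over {0,1}: seq bool (false = 0, true = 1); x0 / x1 = rcons x false / true. *)
Definition word := seq bool.

(* Z = {0,1}^* ∪ {ζ}:  Some w is the word w, None is ζ. *)
Definition Z := option word.
Definition zeta : Z := None.

(* Strict lex order on words, after padding with 1/2 1/2 ..., 0 < 1/2 < 1. *)
Fixpoint lexlt (x y : word) : bool :=
  match x, y with
  | [::], [::] => false
  | [::], b :: _ => b
  | a :: _, [::] => ~~ a
  | a :: x', b :: y' => if a == b then lexlt x' y' else (~~ a) && b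
  end.
Definition lexle (x y : word) : bool := lexlt x y || (x == y).

Definition ltZ (x y : Z) : bool :=
  match x, y with
  | Some a, Some b => lexlt a b
  | Some _, None => true
  | None, _ => false
  end.

Definition is_tree (R : seq word) : Prop :=
  [::] \in R /\
  (forall (x : word) (b : bool), rcons x b \in R -> x \in R) /\
  (forall x : word, x \in R -> (rcons x false \in R) = (rcons x true \in R)).

Definition leaves (R : seq word) : seq word :=
  sort lexle (undup [seq x <- R | rcons x false \notin R]).
Definition nodes (R : seq word) : seq word :=
  sort lexle (undup [seq x <- R | rcons x false \in R]).

Definition nodesZ (R : seq word) : seq Z := map Some (nodes R) ++ [:: zeta].

(* b_R : nodes(R) ∪ {ζ} -> leaves(R), the order preserving bijection, and its inverse. *)
Definition bmap (R : seq word) (z : Z) : word := nth [::] (leaves R) (index z (nodesZ R)).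
Definition bmap_inv (R : seq word) (l : word) : Z := nth zeta (nodesZ R) (index l (leaves R)).

(* Data (L, R, c) of an element of T: f(l_i) = r_{(i + c) mod k}. *)
Definition tree_pair (L R : seq word) : Prop :=
  is_tree L /\ is_tree R /\ size (leaves L) = size (leaves R).

Definition fmap (L R : seq word) (c : nat) (l : word) : word :=
  nth [::] (leaves R) ((index l (leaves L) + c) %% size (leaves L)).

(* The leaf of L that is a prefix of w (w not a node of L). *)
Definition leaf_prefix (L : seq word) (w : word) : word :=
  nth [::] (leaves L) (find (fun l => prefix l w) (leaves L)).

(* The element v of T given by (L,R,c), acting on Cantor space: v(l ω) = f(l) ω. *)
Definition thompson_hom (L R : seq word) (c : nat) (om : nat -> bool) : nat -> bool :=
  let l := leaf_prefix L (mkseq om (\max_(u <- L) size u).+1) in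
  let r := fmap L R c l in
  fun i => if i < size r then nth false r i else om (i - size r + size l).

Definition iotaT (L R : seq word) (c : nat) (z : Z) : Z :=
  match z with
  | None => bmap_inv R (fmap L R c (bmap L None))
  | Some w =>
      if (w \in L) && (rcons w false \in L) then
        bmap_inv R (fmap L R c (bmap L (Some w)))
      else
        let l := leaf_prefix L w in Some (fmap L R c l ++ drop (size l) w)
  end.

Definition Lambda (n : nat) (x : seq Z) : Prop :=
  size x = n /\ uniq x /\ exists k : nat, sorted ltZ (rot k x).

(* Main.v *)
Require Import Defs.
From mathcomp Require Import all_boot.
From mathcomp Require Import zify.
Set Implicit Arguments. Unset Strict Implicit. Unset Printing Implicit Defensive.

Ltac lia' := (try unfold word in * ); (try unfold Z in * ); lia.

Lemma lexlt_irr (x : word) : lexlt x x = false.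
Proof. by elim: x => [|a x IH] //=; rewrite eqxx. Qed.

Lemma lexlt_trans : transitive lexlt.
Proof.
move=> y x z; elim: x y z => [|a x IH] [|b y] [|c z] //=;
repeat match goal with b : bool |- _ => case: b end => //=.
all: by move=> h1 h2; apply: IH h1 h2.
Qed.

Lemma lexlt_asym (x y : word) : lexlt x y -> lexlt y x = false.
Proof.
move=> h; apply/negbTE/negP => h2.
by have := lexlt_trans h h2; rewrite lexlt_irr.
Qed.

Lemma lexlt_total (x y : word) : x != y -> lexlt x y || lexlt y x.
Proof.
elim: x y => [|a x IH] [|b y] //=; first by case: b.
  by case: a.
case: a; case: b => //= h; apply: IH; apply: contra h => /eqP ->; by [].
Qed.

Lemma lexle_trans : transitive lexle.
Proof.
move=> y x z; rewrite /lexle => /orP[h1|/eqP->] /orP[h2|/eqP<-].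
- by rewrite (lexlt_trans h1 h2).
- by rewrite h1.
- by rewrite h2.
- by rewrite eqxx orbT.
Qed.

Lemma lexle_anti : antisymmetric lexle.
Proof.
move=> x y; rewrite /lexle => /andP[/orP[h1|/eqP//] /orP[h2|/eqP//]].
by rewrite (lexlt_asym h1) in h2.
Qed.

Lemma lexle_total : total lexle.
Proof.
move=> x y; rewrite /lexle; case: (eqVneq x y) => [->|ne]; first by apply/orP; left; apply/orP; right.
by case/orP: (lexlt_total ne) => ->; rewrite ?orbT.
Qed.

Lemma ltZ_trans : transitive ltZ.
Proof.
by move=> [y|] [x|] [z|] //=; apply: lexlt_trans.
Qed.

Lemma ltZ_irr : irreflexive ltZ.
Proof. by move=> [x|] //=; rewrite lexlt_irr. Qed.

Inductive btree := Leaf | Node of btree & btree.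

Fixpoint elems (t : btree) : seq word :=
  match t with
  | Leaf => [:: [::]]
  | Node a b => [::] :: map (cons false) (elems a) ++ map (cons true) (elems b)
  end.
Fixpoint nodes_in (t : btree) : seq word :=
  match t with
  | Leaf => [::]
  | Node a b => map (cons false) (nodes_in a) ++ [::] :: map (cons true) (nodes_in b)
  end.
Fixpoint leaves_in (t : btree) : seq word :=
  match t with
  | Leaf => [:: [::]]
  | Node a b => map (cons false) (leaves_in a) ++ map (cons true) (leaves_in b)
  end.
Definition nodesZ_in t : seq Z := map Some (nodes_in t) ++ [:: zeta].

Lemma mem_cons_map (a b : bool) (u : word) (s : seq word) :
  (a :: u \in map (cons b) s) = (a == b) && (u \in s).
Proof.
apply/mapP/andP => [[v vs [-> ->]]|[/eqP -> us]]; first by rewrite eqxx.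
by exists u.
Qed.

Lemma nil_notin_map (b : bool) (s : seq word) : ([::] : word) \in map (cons b) s = false.
Proof. by apply/mapP => -[]. Qed.

Lemma nil_elems t : [::] \in elems t.
Proof. by case: t. Qed.

Lemma elems_prefix t x b : rcons x b \in elems t -> x \in elems t.
Proof.
elim: t x => [|l IHl r IHr] [|a x] //=; rewrite ?inE //.
rewrite !mem_cat !mem_cons_map /=.
case: a => /=; rewrite ?andbF ?orbF /= => h.
- exact: IHr h.
- exact: IHl h.
Qed.

Lemma elems_child t x : x \in elems t ->
  (rcons x false \in elems t) = (rcons x true \in elems t).
Proof.
elim: t x => [|l IHl r IHr] [|a x] //=; rewrite ?inE //=.
- by rewrite !mem_cat !mem_cons_map /= !nil_elems.
rewrite !mem_cat !mem_cons_map /=.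
case: a => /= h; rewrite ?andbF ?orbF ?andbT /= in h *.
- exact: IHr.
- exact: IHl.
Qed.

Lemma is_tree_elems t : is_tree (elems t).
Proof.
split; first exact: nil_elems.
split; [exact: elems_prefix | exact: elems_child].
Qed.

Lemma mem_nodes_in t x :
  (x \in nodes_in t) = (x \in elems t) && (rcons x false \in elems t).
Proof.
elim: t x => [|l IHl r IHr] [|a x] //=;
  rewrite ?inE ?mem_cat ?inE ?nil_notin_map ?mem_cons_map /= ?nil_elems //.
by case: a => /=; rewrite ?andbF ?orbF /=.
Qed.

Lemma mem_leaves_in t x :
  (x \in leaves_in t) = (x \in elems t) && (rcons x false \notin elems t).
Proof.
elim: t x => [|l IHl r IHr] [|a x] //=;
  rewrite ?inE ?mem_cat ?inE ?nil_notin_map ?mem_cons_map /= ?nil_elems //.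
by case: a => /=; rewrite ?andbF ?orbF /=.
Qed.

Lemma pairwise_lex_cons (b : bool) (s : seq word) :
  pairwise lexlt (map (cons b) s) = pairwise lexlt s.
Proof.
rewrite pairwise_map; apply: eq_pairwise => u v /=; by rewrite eqxx.
Qed.

Lemma sorted_nodes_in t : sorted lexlt (nodes_in t).
Proof.
rewrite sorted_pairwise; last exact: lexlt_trans.
elim: t => [|l IHl r IHr] //=.
rewrite pairwise_cat /= !pairwise_lex_cons IHl IHr /= !andbT.
apply/andP; split.
- rewrite allrel_mapl; apply/allrelP => u v _ /=.
  rewrite inE => /orP[/eqP->//|/mapP[w _ ->]] //.
- apply/allP => v /mapP[w _ ->] //.
Qed.

Lemma sorted_leaves_in t : sorted lexlt (leaves_in t).
Proof.
rewrite sorted_pairwise; last exact: lexlt_trans.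
elim: t => [|l IHl r IHr] //=.
rewrite pairwise_cat !pairwise_lex_cons IHl IHr /= !andbT.
rewrite allrel_mapl allrel_mapr; apply/allrelP => u v _ _ //.
Qed.

Lemma uniq_nodes_in t : uniq (nodes_in t).
Proof. apply: sorted_uniq (sorted_nodes_in t); [exact: lexlt_trans | exact: lexlt_irr]. Qed.

Lemma uniq_leaves_in t : uniq (leaves_in t).
Proof. apply: sorted_uniq (sorted_leaves_in t); [exact: lexlt_trans | exact: lexlt_irr]. Qed.

Lemma sorted_nodesZ_in t : sorted ltZ (nodesZ_in t).
Proof.
rewrite sorted_pairwise; last exact: ltZ_trans.
rewrite /nodesZ_in pairwise_cat pairwise_map /= andbT.
apply/andP; split.
- rewrite allrel_mapl; apply/allrelP => u v _; rewrite inE => /eqP -> //.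
- by rewrite -sorted_pairwise ?sorted_nodes_in //; exact: lexlt_trans.
Qed.

Lemma uniq_nodesZ_in t : uniq (nodesZ_in t).
Proof. apply: sorted_uniq (sorted_nodesZ_in t); [exact: ltZ_trans | exact: ltZ_irr]. Qed.

Lemma sub_lex (s : seq word) : sorted lexlt s -> sorted lexle s.
Proof. apply: sub_sorted => u v h; by rewrite /lexle h. Qed.

Lemma nodes_elems t : nodes (elems t) = nodes_in t.
Proof.
rewrite /nodes; apply: (sorted_eq lexle_trans lexle_anti).
- exact: sort_sorted lexle_total _.
- exact: sub_lex (sorted_nodes_in t).
rewrite perm_sort; apply: uniq_perm; [exact: undup_uniq | exact: uniq_nodes_in|].
by move=> u; rewrite mem_undup mem_filter mem_nodes_in andbC.
Qed.

Lemma leaves_elems t : leaves (elems t) = leaves_in t.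
Proof.
rewrite /leaves; apply: (sorted_eq lexle_trans lexle_anti).
- exact: sort_sorted lexle_total _.
- exact: sub_lex (sorted_leaves_in t).
rewrite perm_sort; apply: uniq_perm; [exact: undup_uniq | exact: uniq_leaves_in|].
by move=> u; rewrite mem_undup mem_filter mem_leaves_in andbC.
Qed.

Lemma nodesZ_elems t : nodesZ (elems t) = nodesZ_in t.
Proof. by rewrite /nodesZ nodes_elems. Qed.

Lemma size_leaves_in t : size (leaves_in t) = (size (nodes_in t)).+1.
Proof.
elim: t => [|l IHl r IHr] //=.
by rewrite !size_cat /= !size_map IHl IHr addSn addnS.
Qed.

Lemma size_nodesZ_in t : size (nodesZ_in t) = size (leaves_in t).
Proof. by rewrite /nodesZ_in size_cat size_map addn1 size_leaves_in. Qed.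

Lemma iotaT_formula tL tR c z :
  size (leaves_in tL) = size (leaves_in tR) ->
  z \in nodesZ_in tL ->
  iotaT (elems tL) (elems tR) c z =
  nth zeta (nodesZ_in tR) ((index z (nodesZ_in tL) + c) %% size (leaves_in tL)).
Proof.
move=> hs hz.
have hi : index z (nodesZ_in tL) < size (leaves_in tL).
  by rewrite -size_nodesZ_in index_mem.
have key : forall i, i < size (leaves_in tL) ->
  bmap_inv (elems tR) (fmap (elems tL) (elems tR) c (nth [::] (leaves_in tL) i)) =
  nth zeta (nodesZ_in tR) ((i + c) %% size (leaves_in tL)).
  move=> i hi'; rewrite /bmap_inv /fmap !leaves_elems nodesZ_elems.
  rewrite index_uniq // ?uniq_leaves_in // index_uniq ?uniq_leaves_in //.
  by rewrite -hs ltn_pmod // (leq_ltn_trans _ hi').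
have hb : bmap (elems tL) z = nth [::] (leaves_in tL) (index z (nodesZ_in tL)).
  by rewrite /bmap leaves_elems nodesZ_elems.
case: z hz hi hb => [w|] hz hi hb /=.
- have -> : (w \in elems tL) && (rcons w false \in elems tL).
    by rewrite -mem_nodes_in; move: hz; rewrite /nodesZ_in mem_cat inE orbF (mem_map (@Some_inj _)).
  by rewrite hb key.
- by rewrite hb key.
Qed.

Fixpoint comb (m : nat) : btree :=
  match m with 0 => Leaf | m'.+1 => Node Leaf (comb m') end.

Lemma size_nodes_comb m : size (nodes_in (comb m)) = m.
Proof. by elim: m => //= m IH; rewrite size_map IH. Qed.

Fixpoint expand (t : btree) (j m : nat) : btree :=
  match t with
  | Leaf => comb m
  | Node a b => if j < size (leaves_in a) then Node (expand a j m) b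
                else Node a (expand b (j - size (leaves_in a)) m)
  end.

Lemma size_leaves_expand t j m :
  size (leaves_in (expand t j m)) = size (leaves_in t) + m.
Proof.
elim: t j => [|a IHa b IHb] j /=.
  by rewrite size_leaves_in size_nodes_comb add1n.
case: ifP => _ /=; rewrite !size_cat !size_map ?IHa ?IHb; lia'.
Qed.

Lemma nodes_expand t j m : j < size (leaves_in t) ->
  exists C, size C = m /\
   nodes_in (expand t j m) = take j (nodes_in t) ++ C ++ drop j (nodes_in t).
Proof.
elim: t j => [|a IHa b IHb] j /=.
  move=> _; exists (nodes_in (comb m)).
  by rewrite size_nodes_comb cats0.
move=> hj; case: ifP => hja /=.
- have [C [hC ->]] := IHa j hja.
  exists (map (cons false) C); rewrite size_map hC; split => //.
  have hle : j <= size (map (cons false) (nodes_in a)).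
    by rewrite size_map -ltnS -size_leaves_in.
  rewrite take_cat drop_cat.
  case: ltnP => h.
  + by rewrite !map_cat map_take map_drop !catA.
  + have e0 : j - size (map (cons false) (nodes_in a)) = 0 by lia'.
    rewrite e0 take0 drop0 cats0.
    have hna : size (nodes_in a) <= j by rewrite -(size_map (cons false)).
    by rewrite take_oversize // drop_oversize // cats0 map_cat -!catA.
- have hjb : j - size (leaves_in a) < size (leaves_in b).
    move: hj; rewrite size_cat !size_map; move/negbT: hja; rewrite -leqNgt; lia'.
  have [C [hC ->]] := IHb _ hjb.
  exists (map (cons true) C); rewrite size_map hC; split => //.
  rewrite -cat_rcons -[in RHS]cat_rcons.
  have hs : size (rcons (map (cons false) (nodes_in a)) [::]) = size (leaves_in a).
    by rewrite size_rcons size_map size_leaves_in.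
  rewrite take_cat drop_cat hs ltnNge.
  move/negbT: hja; rewrite -leqNgt => hja; rewrite hja /=.
  by rewrite !map_cat map_take map_drop !catA.
Qed.

Lemma nodesZ_expand t j m : j < size (leaves_in t) ->
  exists C : seq Z, size C = m /\
   nodesZ_in (expand t j m) = take j (nodesZ_in t) ++ C ++ drop j (nodesZ_in t).
Proof.
move=> hj; have [C [hC e]] := nodes_expand m hj.
exists (map Some C); rewrite size_map hC; split => //.
have hle : j <= size (map Some (nodes_in t)).
  by rewrite size_map -ltnS -size_leaves_in.
rewrite /nodesZ_in e take_cat drop_cat.
case: ltnP => h.
- by rewrite !map_cat map_take map_drop !catA.
- have e0 : j - size (map Some (nodes_in t)) = 0 by lia'.
  rewrite e0 take0 drop0 cats0.
  have hna : size (nodes_in t) <= j by rewrite -(size_map Some).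
  by rewrite take_oversize // drop_oversize // cats0 map_cat -!catA.
Qed.

Lemma index_insert (T : eqType) (s C : seq T) j z :
  j <= size s -> uniq (take j s ++ C ++ drop j s) -> z \in s ->
  index z (take j s ++ C ++ drop j s) =
  if index z s < j then index z s else index z s + size C.
Proof.
move=> hj hu hz.
have hs : size (take j s) = j by rewrite size_take_min; apply/minn_idPl.
have ei : index z s = index z (take j s ++ drop j s) by rewrite cat_take_drop.
rewrite ei index_cat [in RHS]index_cat.
case: ifP => hin.
- have hh : index z (take j s) < j by move: (hin); rewrite -index_mem hs.
  by rewrite hh.
- have hd : z \in drop j s.
    by move: hz; rewrite -{1}(cat_take_drop j s) mem_cat hin.
  have hC : z \notin C.
    move: hu; rewrite cat_uniq => /and3P[_ _]; rewrite cat_uniq => /and3P[_ hh _].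
    by apply: contra hh => hc; apply/hasP; exists z.
  rewrite index_cat (negbTE hC) hs ltnNge leq_addr /=; lia'.
Qed.

Lemma shift_aux J : forall t (d : nat -> nat),
  J < size (leaves_in t) ->
  (forall a b, a <= b -> d a <= d b) ->
  (forall p, J <= p -> d p = d J) ->
  exists t', size (leaves_in t') = size (leaves_in t) + d J /\
   forall z, z \in nodesZ_in t -> z \in nodesZ_in t' /\
     index z (nodesZ_in t') = index z (nodesZ_in t) + d (index z (nodesZ_in t)).
Proof.
elim: J => [|J IH] t d hJ hmon hc.
- exists (expand t 0 (d 0)); rewrite size_leaves_expand; split => //.
  have [C [hC e]] := nodesZ_expand (d 0) hJ.
  move=> z hz.
  have hu : uniq (take 0 (nodesZ_in t) ++ C ++ drop 0 (nodesZ_in t)).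
    by rewrite -e uniq_nodesZ_in.
  rewrite e index_insert //; split; first by rewrite take0 drop0 /= mem_cat hz orbT.
  by rewrite ltn0 hC hc.
- set e := d J.+1 - d J.
  have [C [hC eq1]] := nodesZ_expand e hJ.
  set t1 := expand t J.+1 e.
  have hJ1 : J < size (leaves_in t1) by rewrite size_leaves_expand; lia'.
  have hmon' : forall a b, a <= b -> d (minn a J) <= d (minn b J).
    move=> a b hab; apply: hmon; rewrite leq_min geq_minr andbT.
    exact: leq_trans (geq_minl _ _) hab.
  have hc' : forall p, J <= p -> d (minn p J) = d (minn J J).
    by move=> p hp; rewrite minnn (minn_idPr hp).
  have [t' [hs ht']] := IH t1 (fun p => d (minn p J)) hJ1 hmon' hc'.
  exists t'; split.
    rewrite hs size_leaves_expand minnn /e.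
    have := hmon J J.+1 (leqnSn J); lia'.
  move=> z hz.
  have hle : J.+1 <= size (nodesZ_in t) by rewrite size_nodesZ_in ltnW.
  have hu : uniq (take J.+1 (nodesZ_in t) ++ C ++ drop J.+1 (nodesZ_in t)).
    by rewrite -eq1 uniq_nodesZ_in.
  have hz1 : z \in nodesZ_in t1.
    by rewrite /t1 eq1 -{1}(cat_take_drop J.+1 (nodesZ_in t)) !mem_cat in hz *;
       case/orP: hz => ->; rewrite ?orbT.
  have [hz' ->] := ht' z hz1.
  split => //.
  rewrite /t1 eq1 index_insert // hC.
  case: ltnP => hp.
  + rewrite (minn_idPl _) //.
  + rewrite (minn_idPr _); last by rewrite /e; lia'.
    rewrite (hc _ hp) /e; have := hmon J J.+1 (leqnSn J); lia'.
Qed.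

Lemma shift t (d : nat -> nat) :
  (forall a b, a <= b -> d a <= d b) ->
  exists t', size (leaves_in t') = size (leaves_in t) + d (size (leaves_in t)).-1 /\
   forall z, z \in nodesZ_in t -> z \in nodesZ_in t' /\
     index z (nodesZ_in t') = index z (nodesZ_in t) + d (index z (nodesZ_in t)).
Proof.
move=> hmon.
set K := size (leaves_in t).
have hK : 0 < K by rewrite /K size_leaves_in.
have hmon' : forall a b, a <= b -> d (minn a K.-1) <= d (minn b K.-1).
  move=> a b hab; apply: hmon; rewrite leq_min geq_minr andbT.
  exact: leq_trans (geq_minl _ _) hab.
have hc' : forall p, K.-1 <= p -> d (minn p K.-1) = d (minn K.-1 K.-1).
  by move=> p hp; rewrite minnn (minn_idPr hp).
have hK1 : K.-1 < size (leaves_in t) by rewrite ltn_predL.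
have [t' [hs ht]] := shift_aux (J := K.-1) (t := t) (d := fun p => d (minn p K.-1))
   hK1 hmon' hc'.
exists t'; split; first by rewrite hs minnn.
move=> z hz; have [h1 h2] := ht z hz; split => //.
rewrite h2 (minn_idPl _) //.
have : index z (nodesZ_in t) < K by rewrite /K -size_nodesZ_in index_mem.
lia'.
Qed.

Fixpoint comp (N : nat) : btree :=
  match N with 0 => Leaf | N'.+1 => Node (comp N') (comp N') end.

Lemma mem_nodes_comp N (w : word) : (w \in nodes_in (comp N)) = (size w < N).
Proof.
elim: N w => [|N IH] [|a w] //=;
  rewrite ?mem_cat ?inE ?nil_notin_map ?mem_cons_map /= //.
by case: a => /=; rewrite ?andbF ?orbF /= IH.
Qed.

Lemma nth_rot_k (T : Type) (x0 : T) (s : seq T) k t :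
  k <= size s -> t < size s -> nth x0 (rot k s) t = nth x0 s ((t + k) %% size s).
Proof.
move=> hk ht; rewrite /rot nth_cat size_drop.
case: ltnP => h.
- rewrite nth_drop modn_small; last by lia'.
  by rewrite addnC.
- rewrite nth_take; last by lia'.
  have -> : (t + k) %% size s = t - (size s - k).
    have e : t + k = 1 * size s + (t - (size s - k)) by lia'.
    by rewrite e modnMDl modn_small //; lia'.
  by [].
Qed.

Lemma index_lt_sorted (s : seq Z) a b :
  sorted ltZ s -> a \in s -> b \in s -> ltZ a b -> index a s < index b s.
Proof.
move=> hs ha hb hab; case: ltngtP => // h.
- have hba := sorted_ltn_index ltZ_trans hs b a hb ha h.
  by have := ltZ_trans hab hba; rewrite ltZ_irr.
- have e : a = b by rewrite -(nth_index zeta ha) -(nth_index zeta hb) h.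
  by rewrite e ltZ_irr in hab.
Qed.

Lemma normalize t0 n (x : seq Z) : 0 < n -> Lambda n x ->
  {subset x <= nodesZ_in t0} ->
  exists t (al : nat), size (leaves_in t) = n * size (leaves_in t0) /\
  forall i, i < n -> nth zeta x i \in nodesZ_in t /\
   index (nth zeta x i) (nodesZ_in t) =
     (i * size (leaves_in t0) + al) %% (n * size (leaves_in t0)).
Proof.
move=> n0 [hsz [hux [k hk]]] hsub.
set G := size (leaves_in t0).
have [k' [hk' hs]] : exists k', k' <= n /\ sorted ltZ (rot k' x).
  case: (leqP k n) => h; first by exists k.
  exists 0; rewrite rot0; split => //.
  by rewrite rot_oversize in hk => //; rewrite hsz ltnW.
set s := rot k' x.
have hss : size s = n by rewrite size_rot.
pose p t := index (nth zeta s t) (nodesZ_in t0).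
have hsin : forall t, t < n -> nth zeta s t \in nodesZ_in t0.
  move=> t ht; apply: hsub; rewrite -(mem_rot k'); apply: mem_nth; by rewrite hss.
have hpG : forall t, t < n -> p t < G.
  by move=> t ht; rewrite /p /G -size_nodesZ_in index_mem hsin.
have hmono : forall t u, t < u -> u < n -> p t < p u.
  move=> t u htu hun; apply: index_lt_sorted; rewrite ?hsin //.
  - exact: sorted_nodesZ_in.
  - exact: ltn_trans htu hun.
  - apply: (sorted_ltn_nth ltZ_trans zeta hs) => //; rewrite inE hss //.
    exact: ltn_trans htu hun.
have hmono' : forall t u, t <= u -> u < n -> p t <= p u.
  move=> t u; rewrite leq_eqVlt => /orP[/eqP ->//|h] hun.
  exact: ltnW (hmono _ _ h hun).
set be := p n.-1.
have hn1 : n.-1 < n by rewrite ltn_predL.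
have hpbe : forall t, t < n -> p t <= be.
  by move=> t ht; apply: hmono' => //; lia'.
pose d q := \max_(u < n | p u <= q) (u * G + be - p u).
have hdmon : forall a b, a <= b -> d a <= d b.
  move=> a b hab; apply/bigmax_leqP => u hu; apply: leq_bigmax_cond.
  exact: leq_trans hu hab.
have dval : forall t q, t < n -> p t <= q -> (forall u, u < n -> p u <= q -> u <= t) ->
    d q = t * G + be - p t.
  move=> t q ht hq H; apply/eqP; rewrite eqn_leq; apply/andP; split.
  - apply/bigmax_leqP => u hu; have ut := H u (ltn_ord u) hu.
    have h1 := hmono' _ _ ut ht; have h2 := hpbe t ht; have h3 := hpG t ht.
    move: ut; rewrite leq_eqVlt => /orP[/eqP ->//|ut].
    have h4 : u.+1 * G <= t * G by rewrite leq_mul2r ut orbT.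
    rewrite mulSn in h4; lia'.
  - exact: (leq_bigmax_cond (P := fun u : 'I_n => p u <= q)
              (F := fun u : 'I_n => u * G + be - p u) (Ordinal ht) hq).
have [t' [hK ht']] := shift t0 hdmon.
exists t', ((n - k') * G + be); split.
  have hG : 0 < G by rewrite /G size_leaves_in.
  rewrite hK -/G (dval n.-1) //; first last.
  - by move=> u hu _; lia'.
  - by have := hpG _ hn1; lia'.
  have hn : n * G = G + n.-1 * G by rewrite -mulSn prednK.
  by rewrite addnK hn.
move=> i hi.
set t := (i + (n - k')) %% n.
have htn : t < n by rewrite ltn_pmod.
have ex : nth zeta x i = nth zeta s t.
  rewrite /s nth_rot_k ?hsz // /t modnDml.
  have -> : i + (n - k') + k' = i + n by lia'.
  by rewrite modnDr modn_small.
rewrite ex; have [hin hidx] := ht' _ (hsin t htn).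
split => //; rewrite hidx -/(p t).
rewrite (dval t) //; last by move=> u hu hpu; case: (leqP u t) => // h; have := hmono _ _ h hu; lia'.
have hpt := hpbe t htn; have hpt2 := hpG t htn.
have -> : p t + (t * G + be - p t) = t * G + be by lia'.
have hlt : t * G + be < n * G.
  have : t.+1 * G <= n * G by rewrite leq_mul2r htn orbT.
  rewrite mulSn; have := hpG _ hn1; lia'.
rewrite -(modn_small hlt) /t muln_modl modnDml.
by rewrite mulnDl addnA.
Qed.

Definition zsize (z : Z) : nat := if z is Some w then size w else 0.

Theorem lemma3p8 (n : nat) (x y : seq Z) :
  Lambda n x -> Lambda n y ->
  exists (L R : seq word) (c : nat), tree_pair L R /\ map (iotaT L R c) x = y.
Proof.
move=> hx hy.
case: (posnP n) => [n0|npos].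
  move: hx hy => [hsx _] [hsy _].
  rewrite n0 in hsx hsy; move/size0nil: hsx => ->; move/size0nil: hsy => ->.
  exists (elems Leaf), (elems Leaf), 0; split => //.
  by split; [exact: is_tree_elems | split; [exact: is_tree_elems|]].
set N := (\max_(z <- x ++ y) zsize z).+1.
set t0 := comp N.
have hsub : {subset x ++ y <= nodesZ_in t0}.
  move=> [w|] hz; rewrite /nodesZ_in mem_cat; last by rewrite inE eqxx orbT.
  rewrite (mem_map (@Some_inj _)) mem_nodes_comp /N ltnS.
  by rewrite (@leq_bigmax_seq _ (x ++ y) xpredT zsize (Some w) hz isT).
have hsubx : {subset x <= nodesZ_in t0} by move=> z hz; apply: hsub; rewrite mem_cat hz.
have hsuby : {subset y <= nodesZ_in t0} by move=> z hz; apply: hsub; rewrite mem_cat hz orbT.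
have [tL [ax [hL hLx]]] := normalize npos hx hsubx.
have [tR [ay [hR hRy]]] := normalize npos hy hsuby.
set G := size (leaves_in t0) in hL hLx hR hRy.
set K := n * G in hL hLx hR hRy.
have hK : 0 < K by rewrite /K muln_gt0 npos /G size_leaves_in.
exists (elems tL), (elems tR), (ay + (K - ax %% K)); split.
  split; first exact: is_tree_elems.
  split; first exact: is_tree_elems.
  by rewrite !leaves_elems hL hR.
move: hx hy => [hsx _] [hsy _].
apply: (@eq_from_nth _ zeta); first by rewrite size_map hsx hsy.
move=> i; rewrite size_map hsx => hi.
rewrite (nth_map zeta) ?hsx //.
have [hinL hidxL] := hLx i hi; have [hinR hidxR] := hRy i hi.
rewrite iotaT_formula ?hL ?hR // hidxL.
have -> : ((i * G + ax) %% K + (ay + (K - ax %% K))) %% K = (i * G + ay) %% K.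
  rewrite modnDml.
  have hr := ltn_pmod ax hK.
  have hq := divn_eq ax K.
  have e : i * G + ax + (ay + (K - ax %% K)) = (ax %/ K).+1 * K + (i * G + ay).
    rewrite mulSn; lia'.
  by rewrite e modnMDl.
by rewrite -hidxR nth_index.
Qed.
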